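(* Let $(!, \delta, \varepsilon, \mathsf{m}, \mathsf{m}_K)$ be a symmetric monoidal comonad on a symmetric monoidal category $(\mathbb{X}, \otimes, K)$. Then the following are in bijective correspondence: (1) Cocommutative Hopf monoids in $(\mathbb{X}^!, \otimes^\mathsf{m}, (K, \mathsf{m}_K))$; (2) Cocommutative Hopf monoids $(H, \nabla, \mathsf{u}, \Delta, \mathsf{e}, \mathsf{S})$ in $(\mathbb{X}, \otimes, K)$ equipped with a natural transformation $\lambda_X: H \otimes !(X) \to !(H \otimes X)$ such that $\lambda$ is a symmetric monoidal mixed distributive law of $(H \otimes -, \mu^\nabla, \eta^\mathsf{u}, \mathsf{n}^\Delta, \mathsf{n}^\mathsf{e}_K)$ over $(!, \delta, \varepsilon, \mathsf{m}, \mathsf{m}_K)$, $\lambda$ satisfies $\alpha_{H,!(X),!(Y)};(\lambda_X\otimes 1_{!(Y)});\mathsf{m}_{H\otimes X,Y} = (1_H\otimes \mathsf{m}_{X,Y});\lambda_{X\otimes Y};!(\alpha_{H,X,Y})$, and $(\mathsf{S}\otimes 1_{!(X)});\lambda_X = \lambda_X;!(\mathsf{S}\otimes 1_X)$.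
   Context: Composition is in diagrammatic order; $\alpha,\ell,\rho$ are the associator and unitors, $\tau$ the canonical interchange $(A\otimes B)\otimes(C\otimes D)\to(A\otimes C)\otimes(B\otimes D)$. A Hopf monoid is a bimonoid with antipode $\mathsf{S}$ satisfying $\Delta;(1\otimes\mathsf{S});\nabla=\mathsf{e};\mathsf{u}=\Delta;(\mathsf{S}\otimes1);\nabla$. A symmetric monoidal comonad $(!,\delta,\varepsilon,\mathsf{m},\mathsf{m}_K)$ has lax monoidal structure $\mathsf{m}_{A,B}:!(A)\otimes!(B)\to!(A\otimes B)$, $\mathsf{m}_K:K\to!(K)$ compatible with $\delta,\varepsilon$; $\mathbb{X}^!$ is its category of coalgebras with $(A,\omega)\otimes^\mathsf{m}(B,\omega')=(A\otimes B,(\omega\otimes\omega');\mathsf{m}_{A,B})$ and unit $(K,\mathsf{m}_K)$. The monad $H\otimes-$ has $\mu^\nabla_X=\alpha_{H,H,X};(\nabla\otimes1_X)$, $\eta^\mathsf{u}_X=\ell^{-1}_X;(\mathsf{u}\otimes1_X)$, $\mathsf{n}^\Delta_{X,Y}=(\Delta\otimes1_{X\otimes Y});\tau_{H,H,X,Y}$, $\mathsf{n}^\mathsf{e}_K=\rho_H;\mathsf{e}$. A symmetric monoidal mixed distributive law of a symmetric comonoidal monad $(\mathsf{T},\mu,\eta,\mathsf{n},\mathsf{n}_K)$ over $(!,\delta,\varepsilon,\mathsf{m},\mathsf{m}_K)$ is a natural $\lambda_X:\mathsf{T}!(X)\to!\mathsf{T}(X)$ with $\mu_{!(X)};\lambda_X=\mathsf{T}(\lambda_X);\lambda_{\mathsf{T}(X)};!(\mu_X)$,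 $\eta_{!(X)};\lambda_X=!(\eta_X)$, $\mathsf{T}(\delta_X);\lambda_{!(X)};!(\lambda_X)=\lambda_X;\delta_{\mathsf{T}(X)}$, $\lambda_X;\varepsilon_{\mathsf{T}(X)}=\mathsf{T}(\varepsilon_X)$, $\mathsf{n}_{!(X),!(Y)};(\lambda_X\otimes\lambda_Y);\mathsf{m}_{\mathsf{T}(X),\mathsf{T}(Y)}=\mathsf{T}(\mathsf{m}_{X,Y});\lambda_{X\otimes Y};!(\mathsf{n}_{X,Y})$ and $\mathsf{n}_K;\mathsf{m}_K=\mathsf{T}(\mathsf{m}_K);\lambda_K;!(\mathsf{n}_K)$. *)

(* Defs.v *)
(* Composition is written in DIAGRAMMATIC
   order:  f >> g  means "first f, then g"  (the paper's  f;g ). *)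

Set Implicit Arguments.
Unset Strict Implicit.

Record SymMonCat := {
  ob : Type;
  hom : ob -> ob -> Type;
  idm : forall A, hom A A;
  comp : forall A B C, hom A B -> hom B C -> hom A C;
  comp_id_l : forall A B (f : hom A B), comp (idm A) f = f;
  comp_id_r : forall A B (f : hom A B), comp f (idm B) = f;
  comp_assoc : forall A B C D (f : hom A B) (g : hom B C) (h : hom C D),
      comp (comp f g) h = comp f (comp g h);

  tens : ob -> ob -> ob;
  tensm : forall A B C D, hom A B -> hom C D -> hom (tens A C) (tens B D);
  unit_ob : ob;
  tens_id : forall A B, tensm (idm A) (idm B) = idm (tens A B);
  tens_comp : forall A B C A' B' C' (f : hom A B) (g : hom B C)
      (f' : hom A' B') (g' : hom B' C'),
      tensm (comp f g) (comp f' g') = comp (tensm f f') (tensm g g');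

  assoc : forall A B C, hom (tens A (tens B C)) (tens (tens A B) C);
  assoc_inv : forall A B C, hom (tens (tens A B) C) (tens A (tens B C));
  assoc_iso1 : forall A B C, comp (assoc A B C) (assoc_inv A B C) = idm _;
  assoc_iso2 : forall A B C, comp (assoc_inv A B C) (assoc A B C) = idm _;
  assoc_nat : forall A B C A' B' C' (f : hom A A') (g : hom B B') (h : hom C C'),
      comp (tensm f (tensm g h)) (assoc A' B' C')
      = comp (assoc A B C) (tensm (tensm f g) h);

  lu : forall A, hom (tens unit_ob A) A;
  lu_inv : forall A, hom A (tens unit_ob A);
  lu_iso1 : forall A, comp (lu A) (lu_inv A) = idm _;
  lu_iso2 : forall A, comp (lu_inv A) (lu A) = idm _;
  lu_nat : forall A B (f : hom A B),
      comp (tensm (idm unit_ob) f) (lu B) = comp (lu A) f;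

  ru : forall A, hom (tens A unit_ob) A;
  ru_inv : forall A, hom A (tens A unit_ob);
  ru_iso1 : forall A, comp (ru A) (ru_inv A) = idm _;
  ru_iso2 : forall A, comp (ru_inv A) (ru A) = idm _;
  ru_nat : forall A B (f : hom A B),
      comp (tensm f (idm unit_ob)) (ru B) = comp (ru A) f;

  pentagon : forall A B C D,
      comp (assoc A B (tens C D)) (assoc (tens A B) C D)
      = comp (comp (tensm (idm A) (assoc B C D)) (assoc A (tens B C) D))
             (tensm (assoc A B C) (idm D));
  triangle : forall A B,
      comp (assoc A unit_ob B) (tensm (ru A) (idm B)) = tensm (idm A) (lu B);

  sym : forall A B, hom (tens A B) (tens B A);
  sym_nat : forall A B C D (f : hom A B) (g : hom C D),
      comp (tensm f g) (sym B D) = comp (sym A C) (tensm g f);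
  sym_inv : forall A B, comp (sym A B) (sym B A) = idm _;
  hexagon : forall A B C,
      comp (comp (assoc A B C) (sym (tens A B) C)) (assoc C A B)
      = comp (comp (tensm (idm A) (sym B C)) (assoc A C B)) (tensm (sym A C) (idm B))
}.

Arguments hom : clear implicits.
Arguments ob : clear implicits.
Arguments idm {s} A.
Arguments comp {s A B C} f g.
Arguments tens {s} A B.
Arguments tensm {s A B C D} f g.
Arguments unit_ob {s}.
Arguments assoc {s} A B C.
Arguments assoc_inv {s} A B C.
Arguments lu {s} A.
Arguments lu_inv {s} A.
Arguments ru {s} A.
Arguments ru_inv {s} A.
Arguments sym {s} A B.

Declare Scope smc_scope.
Delimit Scope smc_scope with smc.
Open Scope smc_scope.
Notation "f >> g" := (comp f g) (at level 60, right associativity) : smc_scope.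
Notation "f ** g" := (tensm f g) (at level 40, left associativity) : smc_scope.
Notation "A ⊗ B" := (tens A B) (at level 40, left associativity) : smc_scope.

Definition tau {X : SymMonCat} (A B C D : ob X)
  : hom X ((A ⊗ B) ⊗ (C ⊗ D)) ((A ⊗ C) ⊗ (B ⊗ D)) :=
  assoc_inv A B (C ⊗ D)
  >> (idm A ** assoc B C D)
  >> (idm A ** (sym B C ** idm D))
  >> (idm A ** assoc_inv C B D)
  >> assoc A C (B ⊗ D).

Record SymMonComonad (X : SymMonCat) := {
  bang : ob X -> ob X;
  bangm : forall A B, hom X A B -> hom X (bang A) (bang B);
  bang_id : forall A, bangm (idm A) = idm (bang A);
  bang_comp : forall A B C (f : hom X A B) (g : hom X B C),
      bangm (f >> g) = bangm f >> bangm g;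

  delta : forall A, hom X (bang A) (bang (bang A));
  delta_nat : forall A B (f : hom X A B),
      bangm f >> delta B = delta A >> bangm (bangm f);
  eps : forall A, hom X (bang A) A;
  eps_nat : forall A B (f : hom X A B), bangm f >> eps B = eps A >> f;
  comonad_counit_l : forall A, delta A >> eps (bang A) = idm (bang A);
  comonad_counit_r : forall A, delta A >> bangm (eps A) = idm (bang A);
  comonad_coassoc : forall A, delta A >> delta (bang A) = delta A >> bangm (delta A);

  mon : forall A B, hom X (bang A ⊗ bang B) (bang (A ⊗ B));
  monK : hom X unit_ob (bang unit_ob);
  mon_nat : forall A B C D (f : hom X A B) (g : hom X C D),
      (bangm f ** bangm g) >> mon B D = mon A C >> bangm (f ** g);
  mon_assoc : forall A B C,
      assoc (bang A) (bang B) (bang C) >> (mon A B ** idm (bang C)) >> mon (A ⊗ B) C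
      = (idm (bang A) ** mon B C) >> mon A (B ⊗ C) >> bangm (assoc A B C);
  mon_lunit : forall A,
      (monK ** idm (bang A)) >> mon unit_ob A >> bangm (lu A) = lu (bang A);
  mon_runit : forall A,
      (idm (bang A) ** monK) >> mon A unit_ob >> bangm (ru A) = ru (bang A);
  mon_sym : forall A B,
      sym (bang A) (bang B) >> mon B A = mon A B >> bangm (sym A B);

  delta_mon : forall A B,
      mon A B >> delta (A ⊗ B)
      = (delta A ** delta B) >> mon (bang A) (bang B) >> bangm (mon A B);
  delta_monK : monK >> delta unit_ob = monK >> bangm monK;
  eps_mon : forall A B, mon A B >> eps (A ⊗ B) = eps A ** eps B;
  eps_monK : monK >> eps unit_ob = idm unit_ob
}.

Arguments bang {X} s A.
Arguments bangm {X} s {A B} f.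
Arguments delta {X} s A.
Arguments eps {X} s A.
Arguments mon {X} s A B.
Arguments monK {X} s.

Record Hopf (X : SymMonCat) := {
  hcar : ob X;
  hmul : hom X (hcar ⊗ hcar) hcar;
  hunit : hom X unit_ob hcar;
  hcomul : hom X hcar (hcar ⊗ hcar);
  hcounit : hom X hcar unit_ob;
  hanti : hom X hcar hcar;
  hmul_assoc : assoc hcar hcar hcar >> (hmul ** idm hcar) >> hmul
               = (idm hcar ** hmul) >> hmul;
  hmul_lunit : (hunit ** idm hcar) >> hmul = lu hcar;
  hmul_runit : (idm hcar ** hunit) >> hmul = ru hcar;
  hcomul_coassoc : hcomul >> (hcomul ** idm hcar)
                   = hcomul >> (idm hcar ** hcomul) >> assoc hcar hcar hcar;
  hcomul_lcounit : hcomul >> (hcounit ** idm hcar) >> lu hcar = idm hcar;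
  hcomul_rcounit : hcomul >> (idm hcar ** hcounit) >> ru hcar = idm hcar;
  hbi_mul_comul : hmul >> hcomul
                  = (hcomul ** hcomul) >> tau hcar hcar hcar hcar >> (hmul ** hmul);
  hbi_unit_comul : hunit >> hcomul = lu_inv unit_ob >> (hunit ** hunit);
  hbi_mul_counit : hmul >> hcounit = (hcounit ** hcounit) >> lu unit_ob;
  hbi_unit_counit : hunit >> hcounit = idm unit_ob;
  hanti_r : hcomul >> (idm hcar ** hanti) >> hmul = hcounit >> hunit;
  hanti_l : hcomul >> (hanti ** idm hcar) >> hmul = hcounit >> hunit
}.

Definition cocommutative {X : SymMonCat} (H : Hopf X) : Prop :=
  hcomul H >> sym (hcar H) (hcar H) = hcomul H.

(* (1) Cocommutative Hopf monoids in the monoidal category X^! of      *)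
(* !-coalgebras, (A,ω) ⊗^m (B,ω') = (A⊗B, (ω⊗ω');m), unit (K, m_K).   *)
(* Since composition, ⊗, α, ℓ, ρ, σ of X^! are those of X, such a      *)
(* Hopf monoid is literally a Hopf monoid H of X together with a        *)
(* coalgebra structure ω on its carrier such that ∇, u, Δ, e, S are    *)
(* coalgebra morphisms; cocommutativity is the same equation as in X.  *)
Section Coalg.
Variables (X : SymMonCat) (B : SymMonComonad X).

Definition is_coalg (A : ob X) (w : hom X A (bang B A)) : Prop :=
  w >> eps B A = idm A /\ w >> delta B A = w >> bangm B w.

Definition coalg_tens (A A' : ob X) (w : hom X A (bang B A)) (w' : hom X A' (bang B A'))
  : hom X (A ⊗ A') (bang B (A ⊗ A')) := (w ** w') >> mon B A A'.

Definition is_coalg_mor (A A' : ob X) (w : hom X A (bang B A)) (w' : hom X A' (bang B A'))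
  (f : hom X A A') : Prop := w >> bangm B f = f >> w'.

Record HopfCoalg := {
  hc_hopf : Hopf X;
  hc_coact : hom X (hcar hc_hopf) (bang B (hcar hc_hopf));
  hc_is_coalg : is_coalg hc_coact;
  hc_mul_mor : is_coalg_mor (coalg_tens hc_coact hc_coact) hc_coact (hmul hc_hopf);
  hc_unit_mor : is_coalg_mor (monK B) hc_coact (hunit hc_hopf);
  hc_comul_mor : is_coalg_mor hc_coact (coalg_tens hc_coact hc_coact) (hcomul hc_hopf);
  hc_counit_mor : is_coalg_mor hc_coact (monK B) (hcounit hc_hopf);
  hc_anti_mor : is_coalg_mor hc_coact hc_coact (hanti hc_hopf);
  hc_cocomm : cocommutative hc_hopf
}.

Section Dist.
Variable H : Hopf X.
Let h := hcar H.

Definition Tm {A A' : ob X} (f : hom X A A') : hom X (h ⊗ A) (h ⊗ A') := idm h ** f.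
Definition muT (A : ob X) : hom X (h ⊗ (h ⊗ A)) (h ⊗ A) :=
  assoc h h A >> (hmul H ** idm A).
Definition etaT (A : ob X) : hom X A (h ⊗ A) := lu_inv A >> (hunit H ** idm A).
Definition nT (A A' : ob X) : hom X (h ⊗ (A ⊗ A')) ((h ⊗ A) ⊗ (h ⊗ A')) :=
  (hcomul H ** idm (A ⊗ A')) >> tau h h A A'.
Definition nTK : hom X (h ⊗ unit_ob) unit_ob := ru h >> hcounit H.

Definition is_sym_mon_mixed_dist_law
  (lam : forall A : ob X, hom X (h ⊗ bang B A) (bang B (h ⊗ A))) : Prop :=
  (forall A A' (f : hom X A A'), Tm (bangm B f) >> lam A' = lam A >> bangm B (Tm f)) /\
  (forall A, muT (bang B A) >> lam A = Tm (lam A) >> lam (h ⊗ A) >> bangm B (muT A)) /\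
  (forall A, etaT (bang B A) >> lam A = bangm B (etaT A)) /\
  (forall A, Tm (delta B A) >> lam (bang B A) >> bangm B (lam A)
             = lam A >> delta B (h ⊗ A)) /\
  (forall A, lam A >> eps B (h ⊗ A) = Tm (eps B A)) /\
  (forall A A', nT (bang B A) (bang B A') >> (lam A ** lam A') >> mon B (h ⊗ A) (h ⊗ A')
                = Tm (mon B A A') >> lam (A ⊗ A') >> bangm B (nT A A')) /\
  (nTK >> monK B = Tm (monK B) >> lam unit_ob >> bangm B nTK).

Definition lam_assoc_cond
  (lam : forall A : ob X, hom X (h ⊗ bang B A) (bang B (h ⊗ A))) : Prop :=
  forall A A', assoc h (bang B A) (bang B A') >> (lam A ** idm (bang B A'))
                 >> mon B (h ⊗ A) A'
               = (idm h ** mon B A A') >> lam (A ⊗ A') >> bangm B (assoc h A A').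

Definition lam_anti_cond
  (lam : forall A : ob X, hom X (h ⊗ bang B A) (bang B (h ⊗ A))) : Prop :=
  forall A, (hanti H ** idm (bang B A)) >> lam A = lam A >> bangm B (hanti H ** idm A).
End Dist.

Record HopfLambda := {
  hl_hopf : Hopf X;
  hl_cocomm : cocommutative hl_hopf;
  hl_lam : forall A : ob X, hom X (hcar hl_hopf ⊗ bang B A) (bang B (hcar hl_hopf ⊗ A));
  hl_dist : is_sym_mon_mixed_dist_law hl_lam;
  hl_assoc : lam_assoc_cond hl_lam;
  hl_anti : lam_anti_cond hl_lam
}.
End Coalg.

Arguments hc_hopf {X B} h.
Arguments hl_hopf {X B} h.

Definition bijective_map {T U : Type} (f : T -> U) : Prop :=
  (forall x y, f x = f y -> x = y) /\ (forall y, exists x, f x = y).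

(* Main.v *)
Require Import Defs.
From Stdlib Require Import Setoid FunctionalExtensionality ProofIrrelevance Eqdep.
Open Scope smc_scope.
Ltac show := match goal with |- ?g => idtac g end.


Section Gen.
Context {X : SymMonCat}.
Implicit Types A B C D E : ob X.

Lemma pre {A B C D} {f : hom X A B} {g : hom X B C} {h : hom X A C} {k : hom X C D} :
  f >> g = h -> f >> (g >> k) = h >> k.
Proof. intros e; rewrite <- comp_assoc, e; reflexivity. Qed.

Lemma tc {A B C A' B' C'} (f : hom X A B) (g : hom X B C) (f' : hom X A' B') (g' : hom X B' C') :
  (f ** f') >> (g ** g') = (f >> g) ** (f' >> g').
Proof. symmetry; apply tens_comp. Qed.

Lemma tc' {A B C A' B' C' D} (f : hom X A B) (g : hom X B C) (f' : hom X A' B') (g' : hom X B' C') (k : hom X (C ⊗ C') D):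
  (f ** f') >> ((g ** g') >> k) = ((f >> g) ** (f' >> g')) >> k.
Proof. apply pre, tc. Qed.
Ltac rw e := first [rewrite e | rewrite (pre e)]; rewrite ?comp_assoc.

Lemma tsplit_l {A B C D} (f : hom X A B) (g : hom X C D) :
  f ** g = (f ** idm C) >> (idm B ** g).
Proof. rewrite tc, comp_id_l, comp_id_r; reflexivity. Qed.

Lemma tsplit_r {A B C D} (f : hom X A B) (g : hom X C D) :
  f ** g = (idm A ** g) >> (f ** idm D).
Proof. rewrite tc, comp_id_l, comp_id_r; reflexivity. Qed.

Lemma iso_cancel_l {A B C} (i : hom X A B) (j : hom X B A) (f g : hom X B C) :
  j >> i = idm B -> i >> f = i >> g -> f = g.
Proof.
  intros e1 e2. rewrite <- (comp_id_l f), <- (comp_id_l g), <- e1, !comp_assoc, e2. reflexivity.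
Qed.

Lemma iso_cancel_r {A B C} (i : hom X B C) (j : hom X C B) (f g : hom X A B) :
  i >> j = idm B -> f >> i = g >> i -> f = g.
Proof.
  intros e1 e2. rewrite <- (comp_id_r f), <- (comp_id_r g), <- e1, <- !comp_assoc, e2. reflexivity.
Qed.

Lemma assoc_inv_nat {A B C A' B' C'} (f : hom X A A') (g : hom X B B') (h : hom X C C') :
  ((f ** g) ** h) >> assoc_inv A' B' C' = assoc_inv A B C >> (f ** (g ** h)).
Proof.
  apply (iso_cancel_l (assoc A B C) (assoc_inv A B C)); [apply assoc_iso2|].
  rewrite <- comp_assoc, <- assoc_nat, comp_assoc, assoc_iso1, comp_id_r.
  rewrite <- comp_assoc, assoc_iso1, comp_id_l. reflexivity.
Qed.

Lemma tid {A B} : idm A ** idm B = idm (A ⊗ B).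
Proof. apply tens_id. Qed.

Lemma tau_inv A B C D : tau A B C D >> tau A C B D = idm _.
Proof.
  unfold tau. rewrite !comp_assoc.
  rw (assoc_iso1 A C (B ⊗ D)). rewrite comp_id_l.
  rw (tc (idm A) (idm A) (assoc_inv C B D) (assoc C B D)).
  rewrite comp_id_l, assoc_iso2, tid, comp_id_l.
  rw (tc (idm A) (idm A) (sym B C ** idm D) (sym C B ** idm D)).
  rewrite comp_id_l, tc, comp_id_l, sym_inv, tid, tid, comp_id_l.
  rw (tc (idm A) (idm A) (assoc B C D) (assoc_inv B C D)).
  rewrite comp_id_l, assoc_iso1, tid, comp_id_l.
  apply assoc_iso2.
Qed.


Lemma slide1 {A A' B B' C C'} (a : hom X A A') (u : hom X B B') (v : hom X B' C') (u' : hom X B C) (v' : hom X C C') :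
  u >> v = u' >> v' -> (a ** u) >> (idm A' ** v) = (idm A ** u') >> (a ** v').
Proof. intro e. rewrite !tc, comp_id_l, comp_id_r, e. reflexivity. Qed.

Lemma slide2 {A A' B B' C C'} (a : hom X A A') (u : hom X B B') (v : hom X B' C') (u' : hom X B C) (v' : hom X C C') :
  u >> v = u' >> v' -> (u ** a) >> (v ** idm A') = (u' ** idm A) >> (v' ** a).
Proof. intro e. rewrite !tc, comp_id_l, comp_id_r, e. reflexivity. Qed.

Lemma tau_nat {A B C D A' B' C' D'} (a : hom X A A') (b : hom X B B') (c : hom X C C') (d : hom X D D') :
  ((a ** b) ** (c ** d)) >> tau A' B' C' D' = tau A B C D >> ((a ** c) ** (b ** d)).
Proof.
  unfold tau. rewrite !comp_assoc.
  rw (assoc_inv_nat a b (c ** d)).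
  rw (slide1 a _ _ _ _ (assoc_nat b c d)).
  rw (slide1 a _ _ _ _ (slide2 d _ _ _ _ (sym_nat b c))).
  rw (slide1 a _ _ _ _ (assoc_inv_nat c b d)).
  rewrite assoc_nat. reflexivity.
Qed.


Lemma pre3 {A B C D E} {a : hom X A B} {b : hom X B C} {c : hom X C D} {h : hom X A D} {k : hom X D E} :
  a >> (b >> c) = h -> a >> (b >> (c >> k)) = h >> k.
Proof. intros e; rewrite <- e, !comp_assoc; reflexivity. Qed.
Lemma pre4 {A B C D E F} {a : hom X A B} {b : hom X B C} {c : hom X C D} {d : hom X D E} {h : hom X A E} {k : hom X E F} :
  a >> (b >> (c >> d)) = h -> a >> (b >> (c >> (d >> k))) = h >> k.
Proof. intros e; rewrite <- e, !comp_assoc; reflexivity. Qed.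
Lemma pre5 {A B C D E F G} {a : hom X A B} {b : hom X B C} {c : hom X C D} {d : hom X D E} {d' : hom X E F} {h : hom X A F} {k : hom X F G} :
  a >> (b >> (c >> (d >> d'))) = h -> a >> (b >> (c >> (d >> (d' >> k)))) = h >> k.
Proof. intros e; rewrite <- e, !comp_assoc; reflexivity. Qed.
Lemma mergeL {A B C D} (f : hom X B C) (g : hom X C D) : (idm A ** f) >> (idm A ** g) = idm A ** (f >> g).
Proof. rewrite tc, comp_id_l. reflexivity. Qed.
Lemma mergeR {A B C D} (f : hom X B C) (g : hom X C D) : (f ** idm A) >> (g ** idm A) = (f >> g) ** idm A.
Proof. rewrite tc, comp_id_l. reflexivity. Qed.
Lemma mergeL' {A B C D E} (f : hom X B C) (g : hom X C D) (k : hom X (A ⊗ D) E) : (idm A ** f) >> ((idm A ** g) >> k) = (idm A ** (f >> g)) >> k.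
Proof. apply pre, mergeL. Qed.
Lemma mergeR' {A B C D E} (f : hom X B C) (g : hom X C D) (k : hom X (D ⊗ A) E) : (f ** idm A) >> ((g ** idm A) >> k) = ((f >> g) ** idm A) >> k.
Proof. apply pre, mergeR. Qed.
Lemma xch {A B C D} (f : hom X A B) (g : hom X C D) : (idm A ** g) >> (f ** idm D) = (f ** idm C) >> (idm B ** g).
Proof. rewrite !tc, !comp_id_l, !comp_id_r. reflexivity. Qed.
Lemma tri_inv A B : (idm A ** lu_inv B) >> (assoc A unit_ob B >> (ru A ** idm B)) = idm _.
Proof. rewrite triangle, mergeL, lu_iso2, tid. reflexivity. Qed.
Lemma tri2 A B : (idm A ** lu_inv B) >> assoc A unit_ob B = ru_inv A ** idm B.
Proof.
  rewrite <- (comp_id_r (_ >> _)). rewrite <- tid, <- (ru_iso1 A), <- mergeR, !comp_assoc.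
  rewrite (pre3 (tri_inv A B)), comp_id_l. reflexivity.
Qed.
End Gen.
Ltac rw e := first [rewrite e | rewrite (pre e) | rewrite (pre3 e) | rewrite (pre4 e) | rewrite (pre5 e)]; rewrite ?comp_assoc.



Section Com.
Context {X : SymMonCat}.
Variable B : SymMonComonad X.
Notation K := (@unit_ob X).

Lemma bid A : bangm B (idm A) = idm (bang B A).
Proof. apply bang_id. Qed.

Lemma mnat_l {A A'} (f : hom X A A') C :
  (bangm B f ** idm (bang B C)) >> mon B A' C = mon B A C >> bangm B (f ** idm C).
Proof. rewrite <- bid, mon_nat. reflexivity. Qed.

Lemma mnat_r {A A'} (f : hom X A A') C :
  (idm (bang B C) ** bangm B f) >> mon B C A' = mon B C A >> bangm B (idm C ** f).
Proof. rewrite <- bid, mon_nat. reflexivity. Qed.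

Lemma bcomp_id {A A'} (f : hom X A A') (g : hom X A' A) : f >> g = idm A -> bangm B f >> bangm B g = idm _.
Proof. intro e. rewrite <- bang_comp, e, bid. reflexivity. Qed.

Lemma lunit_inv A : lu_inv (bang B A) >> ((monK B ** idm (bang B A)) >> mon B K A) = bangm B (lu_inv A).
Proof.
  rewrite <- (comp_id_r (_ >> _)).
  rewrite <- (bcomp_id (lu A) (lu_inv A)) by apply lu_iso1.
  rewrite !comp_assoc. rw (mon_lunit B A). rewrite <- comp_assoc, lu_iso2, comp_id_l. reflexivity.
Qed.

Lemma runit_inv A : ru_inv (bang B A) >> ((idm (bang B A) ** monK B) >> mon B A K) = bangm B (ru_inv A).
Proof.
  rewrite <- (comp_id_r (_ >> _)).
  rewrite <- (bcomp_id (ru A) (ru_inv A)) by apply ru_iso1.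
  rewrite !comp_assoc. rw (mon_runit B A). rewrite <- comp_assoc, ru_iso2, comp_id_l. reflexivity.
Qed.

Lemma recover {Z Y} (f : hom X Z (bang B Y)) :
  ru_inv Z >> ((f ** monK B) >> (mon B Y K >> bangm B (ru Y))) = f.
Proof.
  rewrite (tsplit_l f (monK B)). rewrite !comp_assoc.
  rw (mon_runit B Y). rw (ru_nat f). rewrite <- comp_assoc, ru_iso2, comp_id_l. reflexivity.
Qed.

Lemma cancelK {Z Y} (f g : hom X Z (bang B Y)) :
  (f ** idm (bang B K)) >> mon B Y K = (g ** idm (bang B K)) >> mon B Y K -> f = g.
Proof.
  intro e. rewrite <- (recover f), <- (recover g).
  rewrite (tsplit_r f (monK B)), (tsplit_r g (monK B)), !comp_assoc.
  rw e. reflexivity.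
Qed.

Lemma mon_assoc_inv A A' A'' :
  (mon B A A' ** idm (bang B A'')) >> (mon B (A ⊗ A') A'' >> bangm B (assoc_inv A A' A''))
  = assoc_inv _ _ _ >> ((idm (bang B A) ** mon B A' A'') >> mon B A (A' ⊗ A'')).
Proof.
  apply (iso_cancel_l (assoc _ _ _) (assoc_inv _ _ _)); [apply assoc_iso2|].
  rw (assoc_iso1 (bang B A) (bang B A') (bang B A'')). rewrite comp_id_l.
  rewrite <- (comp_id_r ((idm _ ** mon B A' A'') >> mon B A (A' ⊗ A''))).
  rewrite <- (bcomp_id (assoc A A' A'') (assoc_inv A A' A'')) by apply assoc_iso1.
  rewrite !comp_assoc. rw (mon_assoc B A A' A''). reflexivity.
Qed.



Lemma mtau A A' C C' :
  tau (bang B A) (bang B A') (bang B C) (bang B C') >> ((mon B A C ** mon B A' C') >> mon B (A ⊗ C) (A' ⊗ C'))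
  = (mon B A A' ** mon B C C') >> (mon B (A ⊗ A') (C ⊗ C') >> bangm B (tau A A' C C')).
Proof.
  unfold tau. rewrite !comp_assoc.
  rewrite (tsplit_r (mon B A C) (mon B A' C')), <- tid, !comp_assoc.
  rw (eq_sym (assoc_nat (idm (bang B A)) (idm (bang B C)) (mon B A' C'))).
  rw (mon_assoc B A C (A' ⊗ C')).
  rewrite !(mergeL' (A := bang B A)), !comp_assoc.
  rw (eq_sym (mon_assoc_inv C A' C')).
  rewrite (mergeR' (A := bang B C') (sym (bang B A') (bang B C)) (mon B C A')).
  rewrite (mon_sym B A' C).
  rewrite <- (mergeR' (A := bang B C') (mon B A' C) (bangm B (sym A' C))).
  rw (mnat_l (sym A' C) C').
  rw (mon_assoc B A' C C').
  rewrite <- !bang_comp.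
  rewrite <- (mergeL (A := bang B A) (idm (bang B A') ** mon B C C') (mon B A' (C ⊗ C') >> _)).
  rewrite <- (mergeL (A := bang B A) (mon B A' (C ⊗ C')) (bangm B _)).
  rewrite !comp_assoc.
  rw (mnat_r (assoc A' C C' >> ((sym A' C ** idm C') >> assoc_inv C A' C')) A).
  rw (eq_sym (assoc_inv_nat (idm (bang B A)) (idm (bang B A')) (mon B C C'))).
  rw (eq_sym (mon_assoc_inv A A' (C ⊗ C'))).
  rewrite tid. rw (tc (idm (bang B A ⊗ bang B A')) (mon B A A') (mon B C C') (idm _)).
  rewrite comp_id_l, comp_id_r.
  rewrite !(mergeL' (A := A)), !comp_assoc, !bang_comp.
  reflexivity.
Qed.

End Com.


Section Main.
Context {X : SymMonCat} (B : SymMonComonad X) (H : Hopf X).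
Notation h := (hcar H).
Notation K := (@unit_ob X).
Variable w : hom X h (bang B h).

Definition L (A : ob X) : hom X (h ⊗ bang B A) (bang B (h ⊗ A)) :=
  (w ** idm (bang B A)) >> mon B h A.

Lemma natL A A' (f : hom X A A') : Tm H (bangm B f) >> L A' = L A >> bangm B (Tm H f).
Proof.
  unfold L, Tm. rw (xch w (bangm B f)). rw (mnat_r B f h). reflexivity.
Qed.

Lemma assocL : lam_assoc_cond L.
Proof.
  intros A A'. unfold L. rewrite !comp_assoc.
  rewrite <- (mergeR' (A := bang B A') (w ** idm (bang B A)) (mon B h A)).
  rw (eq_sym (assoc_nat w (idm (bang B A)) (idm (bang B A')))).
  rw (mon_assoc B h A A').
  rewrite tid. rw (xch w (mon B A A')). reflexivity.
Qed.


Lemma muL_lhs A : muT H (bang B A) >> L A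
  = assoc h h (bang B A) >> (((hmul H >> w) ** idm _) >> mon B h A).
Proof. unfold muT, L. rewrite !comp_assoc. rewrite mergeR'. reflexivity. Qed.

Lemma muL_rhs A : Tm H (L A) >> (L (h ⊗ A) >> bangm B (muT H A))
  = assoc h h (bang B A) >> ((((w ** w) >> (mon B h h >> bangm B (hmul H))) ** idm _) >> mon B h A).
Proof.
  unfold muT, L, Tm. rewrite !comp_assoc, !bang_comp.
  rw (xch w ((w ** idm (bang B A)) >> mon B h A)).
  rewrite <- (mergeL (A:=bang B h) (w ** idm (bang B A)) (mon B h A)). rewrite !comp_assoc.
  rw (eq_sym (mon_assoc B h h A)).
  rw (tc w (idm _) (idm _) (w ** idm (bang B A))). rewrite comp_id_l, comp_id_r.
  rw (assoc_nat w w (idm (bang B A))).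
  rw (eq_sym (mnat_l B (hmul H) A)).
  rewrite !mergeR', !comp_assoc. reflexivity.
Qed.


Lemma etaL_lhs A : etaT H (bang B A) >> L A
  = lu_inv (bang B A) >> (((hunit H >> w) ** idm _) >> mon B h A).
Proof. unfold etaT, L. rewrite !comp_assoc, mergeR'. reflexivity. Qed.

Lemma etaL_rhs A : bangm B (etaT H A)
  = lu_inv (bang B A) >> (((monK B >> bangm B (hunit H)) ** idm _) >> mon B h A).
Proof.
  unfold etaT. rewrite bang_comp, <- (lunit_inv B A). rewrite !comp_assoc.
  rw (eq_sym (mnat_l B (hunit H) A)). rewrite mergeR'. reflexivity.
Qed.

Lemma deltaL_lhs A : Tm H (delta B A) >> (L (bang B A) >> bangm B (L A))
  = ((w >> bangm B w) ** delta B A) >> (mon B (bang B h) (bang B A) >> bangm B (mon B h A)).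
Proof.
  unfold Tm, L. rewrite bang_comp, !comp_assoc.
  rw (xch w (delta B A)).
  rw (eq_sym (mnat_l B w (bang B A))).
  rw (tc w (idm _) (idm _) (delta B A)). rewrite comp_id_l, comp_id_r.
  rw (tc w (bangm B w) (delta B A) (idm _)). rewrite comp_id_r. reflexivity.
Qed.

Lemma deltaL_rhs A : L A >> delta B (h ⊗ A)
  = ((w >> delta B h) ** delta B A) >> (mon B (bang B h) (bang B A) >> bangm B (mon B h A)).
Proof.
  unfold L. rewrite comp_assoc, delta_mon. rewrite ?comp_assoc.
  rw (tc w (delta B h) (idm _) (delta B A)). rewrite comp_id_l. reflexivity.
Qed.

Lemma epsL A : L A >> eps B (h ⊗ A) = (w >> eps B h) ** eps B A.
Proof. unfold L. rewrite comp_assoc, eps_mon, tc, comp_id_l. reflexivity. Qed.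

Lemma nL_lhs A A' : nT H (bang B A) (bang B A') >> ((L A ** L A') >> mon B (h ⊗ A) (h ⊗ A'))
  = ((hcomul H >> ((w ** w) >> mon B h h)) ** mon B A A') >> (mon B (h ⊗ h) (A ⊗ A') >> bangm B (tau h h A A')).
Proof.
  unfold nT, L. rewrite !comp_assoc.
  rewrite (tens_comp (w ** idm _) (mon B h A) (w ** idm _) (mon B h A')). rewrite !comp_assoc.
  rw (eq_sym (tau_nat w w (idm (bang B A)) (idm (bang B A')))).
  rw (mtau B h h A A').
  rewrite tid.
  rw (tc (hcomul H) (w ** w) (idm (bang B A ⊗ bang B A')) (idm _)). rewrite comp_id_l.
  rw (tc (hcomul H >> (w ** w)) (mon B h h) (idm (bang B A ⊗ bang B A')) (mon B A A')). rewrite comp_id_l, ?comp_assoc.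
  reflexivity.
Qed.

Lemma nL_rhs A A' : Tm H (mon B A A') >> (L (A ⊗ A') >> bangm B (nT H A A'))
  = ((w >> bangm B (hcomul H)) ** mon B A A') >> (mon B (h ⊗ h) (A ⊗ A') >> bangm B (tau h h A A')).
Proof.
  unfold Tm, L, nT. rewrite bang_comp, !comp_assoc.
  rw (xch w (mon B A A')).
  rw (eq_sym (mnat_l B (hcomul H) (A ⊗ A'))).
  rw (tc w (idm _) (idm _) (mon B A A')). rewrite comp_id_l, comp_id_r.
  rw (tc w (bangm B (hcomul H)) (mon B A A') (idm _)). rewrite comp_id_r. reflexivity.
Qed.

Lemma nTK_lhs : nTK H >> monK B = ru h >> (hcounit H >> monK B).
Proof. unfold nTK. rewrite comp_assoc. reflexivity. Qed.

Lemma nTK_rhs : Tm H (monK B) >> (L K >> bangm B (nTK H)) = ru h >> (w >> bangm B (hcounit H)).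
Proof.
  unfold Tm, L, nTK. rewrite bang_comp, !comp_assoc.
  rw (xch w (monK B)). rw (mon_runit B h). rw (ru_nat w). reflexivity.
Qed.

Lemma antiL_lhs A : (hanti H ** idm (bang B A)) >> L A = ((hanti H >> w) ** idm _) >> mon B h A.
Proof. unfold L. rewrite mergeR'. reflexivity. Qed.

Lemma antiL_rhs A : L A >> bangm B (hanti H ** idm A) = ((w >> bangm B (hanti H)) ** idm _) >> mon B h A.
Proof. unfold L. rewrite comp_assoc. rw (eq_sym (mnat_l B (hanti H) A)). rewrite mergeR'. reflexivity. Qed.

End Main.


Section Inj.
Context {X : SymMonCat} (B : SymMonComonad X).
Notation K := (@unit_ob X).

Lemma inj_b {Z1 Z2 Y} (f g : hom X (Z1 ⊗ Z2) (bang B Y)) :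
  assoc Z1 Z2 (bang B K) >> ((f ** idm _) >> mon B Y K) = assoc Z1 Z2 (bang B K) >> ((g ** idm _) >> mon B Y K) -> f = g.
Proof.
  intro e. apply (cancelK B). apply (iso_cancel_l _ _ _ _ (assoc_iso2 _ _ _) e).
Qed.

Lemma inj_c {Y} (f g : hom X K (bang B Y)) :
  lu_inv (bang B K) >> ((f ** idm _) >> mon B Y K) = lu_inv (bang B K) >> ((g ** idm _) >> mon B Y K) -> f = g.
Proof.
  intro e. apply (cancelK B). apply (iso_cancel_l _ _ _ _ (lu_iso1 _) e).
Qed.

Lemma dlem {Z Y} (f : hom X Z (bang B (bang B Y))) :
  (idm Z ** monK B) >> ((f ** delta B K) >> (mon B (bang B Y) (bang B K) >> (bangm B (mon B Y K) >> bangm B (bangm B (ru Y))))) = ru Z >> f.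
Proof.
  rw (tc (idm Z) f (monK B) (delta B K)). rewrite comp_id_l, delta_monK.
  rewrite <- (comp_id_r f) at 1. rewrite <- tc, !comp_assoc.
  rw (mnat_r B (monK B) (bang B Y)).
  rewrite <- !bang_comp. rewrite ?comp_assoc. rewrite (mon_runit B Y).
  rewrite (tsplit_l f (monK B)), !comp_assoc. rw (mon_runit B (bang B Y)).
  apply ru_nat.
Qed.

Lemma inj_d {Z Y} (f g : hom X Z (bang B (bang B Y))) :
  (f ** delta B K) >> (mon B (bang B Y) (bang B K) >> bangm B (mon B Y K))
  = (g ** delta B K) >> (mon B (bang B Y) (bang B K) >> bangm B (mon B Y K)) -> f = g.
Proof.
  intro e. apply (iso_cancel_l (ru Z) (ru_inv Z)); [apply ru_iso2|].
  rewrite <- (dlem f), <- (dlem g). rw e. reflexivity.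
Qed.

Lemma inj_e {Z Z'} (f g : hom X Z Z') : f ** eps B K = g ** eps B K -> f = g.
Proof.
  intro e. apply (iso_cancel_l (ru Z) (ru_inv Z)); [apply ru_iso2|].
  rewrite <- !ru_nat.
  assert (E : forall f : hom X Z Z', f ** idm K = (idm Z ** monK B) >> (f ** eps B K)).
  { intro f0. rewrite tc, comp_id_l, eps_monK. reflexivity. }
  rewrite !E, e. reflexivity.
Qed.

Lemma retr {Z Y W W'} (f g : hom X Z (bang B Y)) (s : hom X W W') (r : hom X W' W) :
  s >> r = idm W ->
  (f ** bangm B s) >> mon B Y W' = (g ** bangm B s) >> mon B Y W' ->
  (f ** idm _) >> mon B Y W = (g ** idm _) >> mon B Y W.
Proof.
  intros sr e.
  assert (E : forall f : hom X Z (bang B Y), (f ** idm _) >> mon B Y W = (f ** bangm B s) >> (mon B Y W' >> bangm B (idm Y ** r))).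
  { intro f0. rw (eq_sym (mnat_r B r Y)). rewrite <- comp_assoc, tc, comp_id_r, <- bang_comp, sr, bid. reflexivity. }
  rewrite !E. rw e. reflexivity.
Qed.

Lemma inj_f {Z Y1 Y2} (f g : hom X Z (bang B (Y1 ⊗ Y2))) :
  (f ** mon B K K) >> (mon B (Y1 ⊗ Y2) (K ⊗ K) >> bangm B (tau Y1 Y2 K K))
  = (g ** mon B K K) >> (mon B (Y1 ⊗ Y2) (K ⊗ K) >> bangm B (tau Y1 Y2 K K)) -> f = g.
Proof.
  intro e. rewrite <- !comp_assoc in e.
  apply (iso_cancel_r _ (bangm B (tau Y1 K Y2 K))) in e; [| apply bcomp_id, tau_inv].
  apply (cancelK B).
  apply (retr f g (lu_inv K) (lu K) (lu_iso2 K)).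
  rewrite <- (lunit_inv B K).
  assert (E : forall f : hom X Z (bang B (Y1 ⊗ Y2)), (f ** (lu_inv (bang B K) >> ((monK B ** idm (bang B K)) >> mon B K K))) >> mon B (Y1 ⊗ Y2) (K ⊗ K) = (idm Z ** (lu_inv (bang B K) >> (monK B ** idm (bang B K)))) >> ((f ** mon B K K) >> mon B (Y1 ⊗ Y2) (K ⊗ K))).
  { intro f0. rw (tc (idm Z) f0 (lu_inv (bang B K) >> (monK B ** idm (bang B K))) (mon B K K)). rewrite comp_id_l, ?comp_assoc. reflexivity. }
  rewrite !E. rewrite e. reflexivity.
Qed.

Lemma inj_g {Z Z'} (f g : hom X Z Z') : ru Z >> f = ru Z >> g -> f = g.
Proof. apply (iso_cancel_l _ (ru_inv Z)), ru_iso2. Qed.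

End Inj.


Section Equiv.
Context {X : SymMonCat} (B : SymMonComonad X) (H : Hopf X).
Notation h := (hcar H).
Notation K := (@unit_ob X).

Definition morph_conds (w : hom X h (bang B h)) : Prop :=
  is_coalg w /\
  is_coalg_mor (coalg_tens w w) w (hmul H) /\
  is_coalg_mor (monK B) w (hunit H) /\
  is_coalg_mor w (coalg_tens w w) (hcomul H) /\
  is_coalg_mor w (monK B) (hcounit H).

Lemma dist_of_coalg w : morph_conds w -> is_sym_mon_mixed_dist_law (L B H w).
Proof.
  unfold morph_conds, is_coalg, is_coalg_mor, coalg_tens.
  intros [[He Hd] [Hmul [Hunit [Hcomul Hcounit]]]].
  split; [|split; [|split; [|split; [|split; [|split]]]]].
  - intros A A' f. apply natL.
  - intro A. rewrite muL_lhs, muL_rhs, <- Hmul, comp_assoc. reflexivity.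
  - intro A. rewrite etaL_lhs, etaL_rhs, <- Hunit. reflexivity.
  - intro A. rewrite deltaL_lhs, deltaL_rhs, Hd. reflexivity.
  - intro A. rewrite epsL, He. reflexivity.
  - intros A A'. rewrite nL_lhs, nL_rhs, Hcomul. reflexivity.
  - rewrite nTK_lhs, nTK_rhs, Hcounit. reflexivity.
Qed.

Lemma coalg_of_dist w : is_sym_mon_mixed_dist_law (L B H w) -> morph_conds w.
Proof.
  unfold morph_conds, is_coalg, is_coalg_mor, coalg_tens.
  intros [_ [Pmu [Peta [Pd [Pe [Pn Pk]]]]]].
  specialize (Pmu K). specialize (Peta K). specialize (Pd K). specialize (Pe K). specialize (Pn K K).
  rewrite muL_lhs, muL_rhs in Pmu. rewrite etaL_lhs, etaL_rhs in Peta.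
  rewrite deltaL_lhs, deltaL_rhs in Pd. rewrite epsL in Pe. rewrite nL_lhs, nL_rhs in Pn.
  rewrite nTK_lhs, nTK_rhs in Pk.
  split; [split|split; [|split; [|split]]].
  - apply (inj_e B). exact Pe.
  - symmetry. apply (inj_d B). exact Pd.
  - rewrite comp_assoc. symmetry. apply (inj_b B). exact Pmu.
  - symmetry. apply (inj_c B). exact Peta.
  - symmetry. apply (inj_f B). exact Pn.
  - symmetry. apply inj_g. exact Pk.
Qed.

Lemma anti_iff w : lam_anti_cond (L B H w) <-> is_coalg_mor w w (hanti H).
Proof.
  unfold lam_anti_cond, is_coalg_mor. split.
  - intro P. specialize (P K). rewrite antiL_lhs, antiL_rhs in P. symmetry. apply (cancelK B). exact P.
  - intros P A. rewrite antiL_lhs, antiL_rhs, P. reflexivity.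
Qed.

End Equiv.


Section Rec.
Context {X : SymMonCat} (B : SymMonComonad X) (H : Hopf X).
Notation h := (hcar H).
Notation K := (@unit_ob X).

Definition omega (lam : forall A : ob X, hom X (h ⊗ bang B A) (bang B (h ⊗ A))) : hom X h (bang B h) :=
  ru_inv h >> ((idm h ** monK B) >> (lam K >> bangm B (ru h))).

Lemma lam_form (lam : forall A : ob X, hom X (h ⊗ bang B A) (bang B (h ⊗ A)))
  (Hn : forall A A' (f : hom X A A'), Tm H (bangm B f) >> lam A' = lam A >> bangm B (Tm H f))
  (Ha : lam_assoc_cond lam) A : lam A = L B H (omega lam) A.
Proof.
  pose proof (Ha K A) as E. unfold lam_assoc_cond in E.
  rewrite <- (comp_id_r (lam A)).
  rewrite <- (bid B), <- (tri_inv h A), !bang_comp.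
  rw (eq_sym (Hn _ _ (lu_inv A))). unfold Tm.
  rewrite <- (lunit_inv B A).
  rewrite <- (mergeL (A := h) (lu_inv (bang B A)) ((monK B ** idm (bang B A)) >> mon B K A)).
  rewrite <- (mergeL (A := h) (monK B ** idm (bang B A)) (mon B K A)). rewrite !comp_assoc.
  rw (eq_sym E).
  rw (assoc_nat (idm h) (monK B) (idm (bang B A))).
  rw (tri2 h (bang B A)).
  rw (eq_sym (mnat_l B (ru h) A)).
  rewrite !mergeR'. unfold L, omega. rewrite !comp_assoc. reflexivity.
Qed.

End Rec.


Definition Fmap {X : SymMonCat} {B : SymMonComonad X} (x : HopfCoalg B) : HopfLambda B :=
  @Build_HopfLambda X B (hc_hopf x) (hc_cocomm x) (L B (hc_hopf x) (hc_coact x))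
    (dist_of_coalg B (hc_hopf x) (hc_coact x)
       (conj (hc_is_coalg x) (conj (hc_mul_mor x) (conj (hc_unit_mor x) (conj (hc_comul_mor x) (hc_counit_mor x))))))
    (assocL B (hc_hopf x) (hc_coact x))
    (proj2 (anti_iff B (hc_hopf x) (hc_coact x)) (hc_anti_mor x)).

Theorem proposition5p8 (X : SymMonCat) (B : SymMonComonad X) :
  exists F : HopfCoalg B -> HopfLambda B,
    bijective_map F /\ (forall x : HopfCoalg B, hl_hopf (F x) = hc_hopf x).
Proof.
  exists Fmap. split; [split|].
  - intros [hp1 w1 c1 m1 u1 d1 e1 s1 cc1] [hp2 w2 c2 m2 u2 d2 e2 s2 cc2] Heq.
    unfold Fmap in Heq; simpl in Heq.
    injection Heq. intros Elam Ehp. subst hp2.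
    apply inj_pair2 in Elam.
    assert (Ew : w1 = w2).
    { apply (cancelK B). exact (f_equal (fun l => l unit_ob) Elam). }
    subst w2. f_equal; apply proof_irrelevance.
  - intros [hp cc lam dist as_ an].
    assert (Elam : L B hp (omega B hp lam) = lam).
    { apply functional_extensionality_dep. intro A. symmetry. apply lam_form; [exact (proj1 dist) | exact as_]. }
    assert (D' : is_sym_mon_mixed_dist_law (L B hp (omega B hp lam))) by (rewrite Elam; exact dist).
    assert (N' : lam_anti_cond (L B hp (omega B hp lam))) by (rewrite Elam; exact an).
    destruct (coalg_of_dist B hp _ D') as [c [m [u [d e]]]].
    exists (@Build_HopfCoalg X B hp (omega B hp lam) c m u d e (proj1 (anti_iff B hp _) N') cc).
    unfold Fmap; simpl.
    generalize (dist_of_coalg B hp (omega B hp lam) (conj c (conj m (conj u (conj d e))))).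
    generalize (assocL B hp (omega B hp lam)).
    generalize (proj2 (anti_iff B hp (omega B hp lam)) (proj1 (anti_iff B hp (omega B hp lam)) N')).
    rewrite Elam. intros. f_equal; apply proof_irrelevance.
  - intro x. reflexivity.
Qed.
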